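(* There exists a constant $\delta>0$ depending on the modulus of convexity $m$ of $u$ such that $B_\delta(0)\subset \mathcal{P}(B_R)$. Explicitly, one may take $\delta = \min\left\{ \frac{m_0}{2|Du|_{\partial B_R}},\ \frac{m_0}{2R}\right\}$, where $m_0:=\inf_{\partial B_R}u \geq m(R)$.
   Context: Let $u\in C^4(B_R(0))$ be a convex solution of the Monge-Ampère equation $\det D^2u = f$ in $B_R(0)\subset\mathbb{R}^2$, with $u(0)=0$, $Du(0)=0$, and $0<C_0^{-1}\leq f\leq C_0$. In dimension two such a solution is strictly convex (Aleksandrov, Heinz). Define the injective map $\mathcal{P}: B_R\to\mathbb{R}^2$ by $\mathcal{P}(x)=(u_{x_1}(x), x_2)$ (the coordinate change associated with the partial Legendre transform $u^*(y_1,y_2)=\sup_{x_1}\{x_1y_1-u(x_1,y_2)\}$ in the $e_1$-direction). The modulus of convexity of $u$ is $m(t)=\inf\{u(x)-\ell_z(x): |x-z|>t\}$ for $t>0$, where $\ell_z$ is the supporting function of $u$ at $z$; $m$ is positive by strict convexity. $|Du|_{\partial B_R}$ denotes $\sup_{\partial B_R}|Du|$. *)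

(* Defs.v *)
From Stdlib Require Import Reals Lra.
From Coquelicot Require Import Coquelicot.
Open Scope R_scope.

Definition pt := (R * R)%type.

Definition enorm (x : pt) : R := sqrt (fst x ^ 2 + snd x ^ 2).

Definition in_ball (r : R) (x : pt) : Prop := fst x ^ 2 + snd x ^ 2 < r ^ 2.
Definition on_sphere (r : R) (x : pt) : Prop := fst x ^ 2 + snd x ^ 2 = r ^ 2.

Definition pd1 (f : pt -> R) (x : pt) : R := Derive (fun t => f (t, snd x)) (fst x).
Definition pd2 (f : pt -> R) (x : pt) : R := Derive (fun t => f (fst x, t)) (snd x).

Fixpoint Ck (k : nat) (U : pt -> Prop) (f : pt -> R) : Prop :=
  match k with
  | O => forall x, U x -> continuous f x
  | S k' => (forall x, U x -> continuous f x) /\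
            (forall x, U x -> ex_derive (fun t => f (t, snd x)) (fst x)
                           /\ ex_derive (fun t => f (fst x, t)) (snd x)) /\
            Ck k' U (pd1 f) /\ Ck k' U (pd2 f)
  end.

Definition detHess (u : pt -> R) (x : pt) : R :=
  pd1 (pd1 u) x * pd2 (pd2 u) x - pd2 (pd1 u) x * pd1 (pd2 u) x.

Definition convex_on (U : pt -> Prop) (u : pt -> R) : Prop :=
  forall x y t, U x -> U y -> 0 <= t <= 1 ->
    u (t * fst x + (1 - t) * fst y, t * snd x + (1 - t) * snd y)
      <= t * u x + (1 - t) * u y.

Definition ell (u : pt -> R) (z x : pt) : R :=
  u z + pd1 u z * (fst x - fst z) + pd2 u z * (snd x - snd z).

Definition modconv (r : R) (u : pt -> R) (t : R) : Rbar :=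
  Glb_Rbar (fun y => exists x z, in_ball r x /\ in_ball r z /\
     enorm (fst x - fst z, snd x - snd z) > t /\ y = u x - ell u z x).

Definition m0 (r : R) (u : pt -> R) : R :=
  real (Glb_Rbar (fun y => exists x, on_sphere r x /\ y = u x)).

Definition DuB (r : R) (u : pt -> R) : R :=
  real (Lub_Rbar (fun y => exists x, on_sphere r x /\ y = enorm (pd1 u x, pd2 u x))).

Definition Pmap (u : pt -> R) (x : pt) : pt := (pd1 u x, snd x).

Definition delta (r : R) (u : pt -> R) : R :=
  Rmin (m0 r u / (2 * DuB r u)) (m0 r u / (2 * r)).

(* Main.v *)
Require Import Defs.
From Stdlib Require Import Reals Lra Psatz.
From Coquelicot Require Import Coquelicot.
Open Scope R_scope.

Definition conv1 (phi : R -> R) (a b : R) : Prop :=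
  forall s t l, a < s < b -> a < t < b -> 0 <= l <= 1 ->
    phi (l * s + (1 - l) * t) <= l * phi s + (1 - l) * phi t.

Lemma deriv_lower (phi : R -> R) x d eps :
  derivable_pt_lim phi x d -> 0 < eps ->
  exists del, 0 < del /\ forall h, h <> 0 -> Rabs h < del ->
     d * h - eps * Rabs h < phi (x + h) - phi x < d * h + eps * Rabs h.
Proof.
  intros H He. destruct (H eps He) as [del Hd].
  exists del. split. apply cond_pos. intros h Hh Hhd.
  specialize (Hd h Hh Hhd).
  set (w := (phi (x + h) - phi x) / h) in *.
  assert (Hw : phi (x + h) - phi x = w * h) by (unfold w; field; auto).
  rewrite Hw. apply Rabs_def2 in Hd. destruct Hd as [H1 H2].
  destruct (Rle_lt_dec 0 h) as [Hp|Hn].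
  - assert (0 < h) by (destruct Hp; auto; congruence).
    rewrite Rabs_right by lra. split; nra.
  - rewrite Rabs_left by lra. split; nra.
Qed.

Lemma conv1_grad phi a b x y d :
  conv1 phi a b -> a < x < b -> a < y < b -> derivable_pt_lim phi x d ->
  phi x + d * (y - x) <= phi y.
Proof.
  intros Hc Hx Hy Hd.
  destruct (Req_dec y x) as [->|Hyx]. lra.
  apply Rnot_lt_le. intro Hlt.
  set (e := phi x + d * (y - x) - phi y).
  assert (He : 0 < e) by (unfold e; lra).
  assert (Hyx' : 0 < Rabs (y - x)) by (apply Rabs_pos_lt; lra).
  destruct (deriv_lower phi x d (e / Rabs (y - x)) Hd) as [del [Hdel H]].
  { apply Rdiv_lt_0_compat; lra. }
  set (l := Rmin (1/2) (del / (2 * Rabs (y - x)))).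
  assert (Hl0 : 0 < l). { unfold l; apply Rmin_pos. lra. apply Rdiv_lt_0_compat; lra. }
  assert (Hl1 : l <= 1/2) by (unfold l; apply Rmin_l).
  assert (Hl2 : l <= del / (2 * Rabs (y - x))) by (unfold l; apply Rmin_r).
  assert (Hh : l * (y - x) <> 0). { intro Z. apply Rmult_integral in Z. destruct Z; lra. }
  assert (Hha : Rabs (l * (y - x)) < del).
  { rewrite Rabs_mult, (Rabs_right l) by lra.
    apply Rle_lt_trans with (del / (2 * Rabs (y - x)) * Rabs (y - x)).
    apply Rmult_le_compat_r; lra.
    field_simplify; lra. }
  destruct (H _ Hh Hha) as [H1 _].
  assert (Hl01 : 0 <= l <= 1) by lra.
  specialize (Hc y x l Hy Hx Hl01).
  replace (l * y + (1 - l) * x) with (x + l * (y - x)) in Hc by ring.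
  rewrite Rabs_mult, (Rabs_right l) in H1 by lra.
  assert (Hm : e / Rabs (y - x) * (l * Rabs (y - x)) = l * e) by (field; lra).
  rewrite Hm in H1. unfold e in H1. nra.
Qed.

Lemma conv1_mono phi a b x y dx dy :
  conv1 phi a b -> a < x < b -> a < y < b -> x <= y ->
  derivable_pt_lim phi x dx -> derivable_pt_lim phi y dy -> dx <= dy.
Proof.
  intros Hc Hx Hy Hxy H1 H2.
  destruct (Req_dec x y) as [->|Hne].
  - rewrite (uniqueness_limite _ _ _ _ H1 H2). lra.
  - pose proof (conv1_grad _ _ _ _ _ _ Hc Hx Hy H1).
    pose proof (conv1_grad _ _ _ _ _ _ Hc Hy Hx H2). nra.
Qed.

Lemma conv1_second phi dphi a b x l :
  conv1 phi a b -> a < x < b ->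
  (forall t, a < t < b -> derivable_pt_lim phi t (dphi t)) ->
  derivable_pt_lim dphi x l -> 0 <= l.
Proof.
  intros Hc Hx Hd Hl. apply Rnot_lt_le. intro Hneg.
  destruct (deriv_lower dphi x l (- l / 2) Hl) as [del [Hdel H]]. lra.
  set (h := Rmin (del / 2) ((b - x) / 2)).
  assert (Hh0 : 0 < h). { unfold h; apply Rmin_pos; lra. }
  assert (Hh1 : h <= del / 2) by apply Rmin_l.
  assert (Hh2 : h <= (b - x) / 2) by apply Rmin_r.
  destruct (H h ltac:(lra) ltac:(rewrite Rabs_right; lra)) as [_ H2].
  rewrite Rabs_right in H2 by lra.
  assert (dphi x <= dphi (x + h)).
  { apply (conv1_mono phi a b x (x + h)); auto; try lra. apply Hd; lra. }
  nra.
Qed.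

Lemma cont_2d (f : pt -> R) (x : pt) :
  continuous f x -> continuity_2d_pt (fun a b => f (a, b)) (fst x) (snd x).
Proof.
  intros H. apply continuity_2d_pt_filterlim.
  destruct x as [x1 x2]; simpl.
  eapply filterlim_ext; [| exact H].
  intros [a b]; reflexivity.
Qed.

Lemma Ck_diff k : forall (U : pt -> Prop) (f : pt -> R) x,
  Ck k U f -> U x -> ex_diff_n (fun a b => f (a, b)) k (fst x) (snd x).
Proof.
  induction k as [|k IH]; intros U f x H Hx.
  - simpl in *. split; auto. apply cont_2d. auto.
  - destruct H as [Hc [Hd [H1 H2]]]. simpl.
    split. apply cont_2d; auto.
    destruct (Hd x Hx) as [Hd1 Hd2].
    split. exact Hd1. split. exact Hd2.
    split.
    + exact (IH U (pd1 f) x H1 Hx).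
    + exact (IH U (pd2 f) x H2 Hx).
Qed.

Lemma Ck_S k : forall U f, Ck (S k) U f -> Ck k U f.
Proof.
  induction k as [|k IH]; intros U f H.
  - simpl in *. tauto.
  - destruct H as [Hc [Hd [H1 H2]]]. split; [exact Hc|]. split; [exact Hd|].
    split; apply IH; assumption.
Qed.

Lemma ball_open r x : in_ball r x ->
  exists d : posreal, forall a b, Rabs (a - fst x) < d -> Rabs (b - snd x) < d ->
    in_ball r (a, b).
Proof.
  unfold in_ball. destruct x as [x1 x2]; simpl. intros H.
  set (K := 2 * (Rabs x1 + Rabs x2 + 1)).
  assert (HK : 0 < K) by (unfold K; pose proof (Rabs_pos x1); pose proof (Rabs_pos x2); lra).
  set (d := Rmin 1 ((r ^ 2 - (x1 ^ 2 + x2 ^ 2)) / (2 * K))).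
  assert (Hd : 0 < d). { unfold d. apply Rmin_pos. lra. apply Rdiv_lt_0_compat; lra. }
  exists (mkposreal d Hd). simpl. intros a b Ha Hb.
  assert (Hd1 : d <= 1) by apply Rmin_l.
  assert (Hd2 : d <= (r ^ 2 - (x1 ^ 2 + x2 ^ 2)) / (2 * K)) by apply Rmin_r.
  assert (Hd3 : d * (2 * K) <= r ^ 2 - (x1 ^ 2 + x2 ^ 2)).
  { apply Rmult_le_reg_r with (/ (2*K)). apply Rinv_0_lt_compat; lra.
    rewrite Rmult_assoc, Rinv_r by lra. lra. }
  assert (Ha2 : Rabs a < Rabs x1 + d).
  { pose proof (Rabs_triang_inv a x1). lra. }
  assert (Hb2 : Rabs b < Rabs x2 + d).
  { pose proof (Rabs_triang_inv b x2). lra. }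
  assert (a ^ 2 = Rabs a ^ 2) by (rewrite pow2_abs; auto).
  assert (b ^ 2 = Rabs b ^ 2) by (rewrite pow2_abs; auto).
  assert (x1 ^ 2 = Rabs x1 ^ 2) by (rewrite pow2_abs; auto).
  assert (x2 ^ 2 = Rabs x2 ^ 2) by (rewrite pow2_abs; auto).
  pose proof (Rabs_pos a). pose proof (Rabs_pos b).
  pose proof (Rabs_pos x1). pose proof (Rabs_pos x2).
  unfold K in Hd3.
  assert (Rabs a ^ 2 < (Rabs x1 + d) ^ 2) by nra.
  assert (Rabs b ^ 2 < (Rabs x2 + d) ^ 2) by nra.
  nra.
Qed.

Lemma diffC2 (g : R -> R -> R) x y :
  locally_2d (ex_diff_n g 2) x y ->
  differentiable_pt_lim g x y (Derive (fun z => g z y) x) (Derive (fun z => g x z) y).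
Proof.
  intros H.
  assert (H' : locally_2d (fun u v => ex_diff_n g (S 1) u v) x y) by exact H.
  destruct (Taylor_Lagrange_2d g 1 x y H') as [D [del Hdel]].
  intros eps.
  set (d := Rmin del (eps / (Rabs D + 1))).
  assert (Hd : 0 < d).
  { unfold d. apply Rmin_pos. apply cond_pos. apply Rdiv_lt_0_compat.
    apply cond_pos. pose proof (Rabs_pos D); lra. }
  exists (mkposreal d Hd). simpl. intros u v Hu Hv.
  assert (Hd1 : d <= del) by apply Rmin_l.
  assert (Hd2 : d <= eps / (Rabs D + 1)) by apply Rmin_r.
  assert (Hu' : Rabs (u - x) < del) by lra.
  assert (Hv' : Rabs (v - y) < del) by lra.
  specialize (Hdel u v Hu' Hv').
  unfold DL_pol, differential in Hdel. simpl in Hdel. unfold partial_derive in Hdel; simpl in Hdel.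
  unfold C in Hdel; simpl in Hdel.
  set (M := Rmax (Rabs (u - x)) (Rabs (v - y))) in *.
  assert (HM0 : 0 <= M) by (unfold M; apply Rle_trans with (Rabs (u-x)); [apply Rabs_pos|apply Rmax_l]).
  assert (HMd : M < d) by (unfold M; apply Rmax_lub_lt; auto).
  replace (g u v - g x y - (Derive (fun z => g z y) x * (u - x) + Derive (fun z => g x z) y * (v - y)))
    with (g u v - (1 / (1 * 1) * g x y * 1 * 1 / 1 +
       (1 / (1 * 1) * Derive (fun x0 : R => g x x0) y * 1 * ((v - y) * 1) +
        1 / (1 * 1) * Derive (fun x0 : R => g x0 y) x * ((u - x) * 1) * 1) / 1)) by field.
  apply Rle_trans with (1 := Hdel).
  assert (HDe : (Rabs D + 1) * d <= eps).
  { apply Rmult_le_reg_r with (/ (Rabs D + 1)). apply Rinv_0_lt_compat; pose proof (Rabs_pos D); lra.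
    replace ((Rabs D + 1) * d * / (Rabs D + 1)) with d by (field; pose proof (Rabs_pos D); lra).
    exact Hd2. }
  pose proof (Rle_abs D). pose proof (Rabs_pos D).
  assert (pos_eps : 0 < eps) by apply cond_pos.
  simpl.
  assert (D * (M * (M * 1)) <= Rabs D * M * M).
  { replace (D * (M * (M * 1))) with (D * (M * M)) by ring.
    rewrite Rmult_assoc. apply Rmult_le_compat_r; nra. }
  assert (Rabs D * M * M <= (Rabs D + 1) * d * M).
  { apply Rmult_le_compat_r; auto. nra. }
  assert ((Rabs D + 1) * d * M <= eps * M) by (apply Rmult_le_compat_r; auto).
  lra.
Qed.

Lemma lin_deriv a q t : derivable_pt_lim (fun s => a + s * q) t q.
Proof.
  apply is_derive_Reals. auto_derive; auto. ring.
Qed.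

Lemma loc_diff2 r g x1 x2 : Ck 2 (in_ball r) g -> in_ball r (x1, x2) ->
  locally_2d (ex_diff_n (fun a b => g (a, b)) 2) x1 x2.
Proof.
  intros Hg Hx. destruct (ball_open r _ Hx) as [d Hd].
  exists d. intros u v Hu Hv.
  exact (Ck_diff 2 _ g (u, v) Hg (Hd u v Hu Hv)).
Qed.

Lemma chain r g a1 a2 q1 q2 t : Ck 2 (in_ball r) g ->
  in_ball r (a1 + t * q1, a2 + t * q2) ->
  derivable_pt_lim (fun s => g (a1 + s * q1, a2 + s * q2)) t
    (q1 * pd1 g (a1 + t * q1, a2 + t * q2) + q2 * pd2 g (a1 + t * q1, a2 + t * q2)).
Proof.
  intros Hg Hx.
  pose proof (diffC2 _ _ _ (loc_diff2 r g _ _ Hg Hx)) as HD.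
  pose proof (derivable_pt_lim_comp_2d (fun a b => g (a, b)) (fun s => a1 + s * q1)
     (fun s => a2 + s * q2) t _ _ q1 q2 HD (lin_deriv a1 q1 t) (lin_deriv a2 q2 t)) as H.
  unfold pd1, pd2; simpl.
  replace (q1 * Derive (fun t0 : R => g (t0, a2 + t * q2)) (a1 + t * q1) +
     q2 * Derive (fun t0 : R => g (a1 + t * q1, t0)) (a2 + t * q2))
   with (Derive (fun z : R => g (z, a2 + t * q2)) (a1 + t * q1) * q1 +
       Derive (fun z : R => g (a1 + t * q1, z)) (a2 + t * q2) * q2) by ring.
  exact H.
Qed.

Lemma schwarz_pt r g x : Ck 2 (in_ball r) g -> in_ball r x ->
  pd1 (pd2 g) x = pd2 (pd1 g) x.
Proof.
  intros Hg Hx. destruct x as [x1 x2].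
  destruct Hg as [Hc [Hd [H1 H2]]].
  destruct H1 as [H1c [H1d [H11 H12]]].
  destruct H2 as [H2c [H2d [H21 H22]]].
  pose proof (Schwarz (fun a b => g (a, b)) x1 x2) as S.
  unfold pd1, pd2 at 1; simpl.
  unfold pd1, pd2 in S |- *; simpl in *.
  apply S.
  - destruct (ball_open r _ Hx) as [d Hb]. exists d. intros u v Hu Hv.
    specialize (Hb u v Hu Hv).
    destruct (Hd _ Hb) as [A B]. destruct (H1d _ Hb) as [C D]. destruct (H2d _ Hb) as [E F].
    simpl in *. repeat split; assumption.
  - exact (cont_2d _ (x1, x2) (H21 _ Hx)).
  - exact (cont_2d _ (x1, x2) (H12 _ Hx)).
Qed.

Lemma conv_line r u x1 x2 q1 q2 a b : convex_on (in_ball r) u ->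
  (forall t, a < t < b -> in_ball r (x1 + t * q1, x2 + t * q2)) ->
  conv1 (fun t => u (x1 + t * q1, x2 + t * q2)) a b.
Proof.
  intros Hc Hb s t l Hs Ht Hl.
  pose proof (Hc _ _ l (Hb s Hs) (Hb t Ht) Hl) as H. simpl in H.
  replace (x1 + (l * s + (1 - l) * t) * q1, x2 + (l * s + (1 - l) * t) * q2)
    with (l * (x1 + s * q1) + (1 - l) * (x1 + t * q1), l * (x2 + s * q2) + (1 - l) * (x2 + t * q2))
    by (f_equal; ring).
  exact H.
Qed.

Lemma d2_line r u x1 x2 q1 q2 t : Ck 4 (in_ball r) u ->
  in_ball r (x1 + t * q1, x2 + t * q2) ->
  derivable_pt_lim (fun s => q1 * pd1 u (x1 + s * q1, x2 + s * q2) + q2 * pd2 u (x1 + s * q1, x2 + s * q2)) t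
    (q1 * (q1 * pd1 (pd1 u) (x1 + t * q1, x2 + t * q2) + q2 * pd2 (pd1 u) (x1 + t * q1, x2 + t * q2))
   + q2 * (q1 * pd1 (pd2 u) (x1 + t * q1, x2 + t * q2) + q2 * pd2 (pd2 u) (x1 + t * q1, x2 + t * q2))).
Proof.
  intros H4 Hx.
  destruct H4 as [_ [_ [H1 H2]]].
  pose proof (chain r (pd1 u) x1 x2 q1 q2 t (Ck_S _ _ _ H1) Hx) as D1.
  pose proof (chain r (pd2 u) x1 x2 q1 q2 t (Ck_S _ _ _ H2) Hx) as D2.
  apply is_derive_Reals in D1. apply is_derive_Reals in D2.
  apply is_derive_Reals.
  apply (is_derive_plus (fun s => q1 * pd1 u (x1 + s * q1, x2 + s * q2)) (fun s => q2 * pd2 u (x1 + s * q1, x2 + s * q2))).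
  - apply (is_derive_scal (fun s => pd1 u (x1 + s * q1, x2 + s * q2))). exact D1.
  - apply (is_derive_scal (fun s => pd2 u (x1 + s * q1, x2 + s * q2))). exact D2.
Qed.

Lemma hess_pos r u w a b : Ck 4 (in_ball r) u -> convex_on (in_ball r) u ->
  in_ball r w -> 0 < detHess u w -> (a <> 0 \/ b <> 0) ->
  0 < a * (a * pd1 (pd1 u) w + b * pd2 (pd1 u) w) + b * (a * pd1 (pd2 u) w + b * pd2 (pd2 u) w).
Proof.
  intros H4 Hc Hw Hdet Hab.
  assert (HS : pd1 (pd2 u) w = pd2 (pd1 u) w).
  { apply (schwarz_pt r); auto. do 2 apply Ck_S. exact H4. }
  destruct w as [w1 w2].
  destruct (ball_open r _ Hw) as [d Hd]. simpl in Hd.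
  assert (Hline : forall t, -d < t < d -> in_ball r (w1 + t * 1, w2 + t * 0)).
  { intros t Ht. apply Hd. replace (w1 + t * 1 - w1) with t by ring. apply Rabs_def1; lra.
    replace (w2 + t * 0 - w2) with 0 by ring. rewrite Rabs_R0. apply cond_pos. }
  assert (HA : 0 <= pd1 (pd1 u) (w1, w2)).
  { pose proof (cond_pos d) as dpos.
    assert (Hp : in_ball r (w1 + 0 * 1, w2 + 0 * 0)) by (apply Hline; lra).
    pose proof (d2_line r u w1 w2 1 0 0 H4 Hp) as D2.
    replace (w1 + 0 * 1, w2 + 0 * 0) with (w1, w2) in D2 by (f_equal; ring).
    assert (K2 : forall t, -d < t < d -> derivable_pt_lim (fun t => u (w1 + t * 1, w2 + t * 0)) t
       (1 * pd1 u (w1 + t * 1, w2 + t * 0) + 0 * pd2 u (w1 + t * 1, w2 + t * 0))).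
    { intros t Ht. apply (chain r). do 2 apply Ck_S; exact H4. apply Hline; auto. }
    assert (H0d : -d < 0 < d) by lra.
    pose proof (conv1_second (fun t => u (w1 + t * 1, w2 + t * 0))
      (fun s => 1 * pd1 u (w1 + s * 1, w2 + s * 0) + 0 * pd2 u (w1 + s * 1, w2 + s * 0))
      (-d) d 0 _ (conv_line r u w1 w2 1 0 (-d) d Hc Hline) H0d K2 D2) as K.
    lra. }
  unfold detHess in Hdet. rewrite HS in *.
  set (A := pd1 (pd1 u) (w1, w2)) in *.
  set (B := pd2 (pd1 u) (w1, w2)) in *.
  set (C := pd2 (pd2 u) (w1, w2)) in *.
  assert (HA' : 0 < A).
  { destruct HA as [HA|HA]; auto. rewrite <- HA in Hdet. nra. }
  assert (E : A * (a * (a * A + b * B) + b * (a * B + b * C)) = (a * A + b * B) ^ 2 + b ^ 2 * (A * C - B * B)) by ring.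
  destruct (Req_dec b 0) as [Hb0|Hb0].
  - subst b. destruct Hab as [Ha|Ha]; [|lra].
    assert (0 < a * a) by (apply Rsqr_pos_lt; auto). nra.
  - assert (0 < b ^ 2) by (apply pow2_gt_0; auto).
    assert (0 < A * (a * (a * A + b * B) + b * (a * B + b * C))).
    { rewrite E. pose proof (pow2_ge_0 (a * A + b * B)). nra. }
    nra.
Qed.

Lemma u_pos r u q1 q2 : Ck 4 (in_ball r) u -> convex_on (in_ball r) u ->
  (forall x, in_ball r x -> 0 < detHess u x) ->
  u (0, 0) = 0 -> pd1 u (0, 0) = 0 -> pd2 u (0, 0) = 0 ->
  in_ball r (q1, q2) -> (q1 <> 0 \/ q2 <> 0) -> 0 < u (q1, q2).
Proof.
  intros H4 Hc Hdet Hu0 Hp1 Hp2 Hq Hne.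
  unfold in_ball in Hq; simpl in Hq.
  assert (Hin : forall t, 0 <= t <= 1 -> in_ball r (0 + t * q1, 0 + t * q2)).
  { intros t Ht. unfold in_ball; simpl.
    assert (t ^ 2 <= 1) by nra.
    assert (0 <= q1 ^ 2 + q2 ^ 2) by nra. nra. }
  set (phi := fun s => u (0 + s * q1, 0 + s * q2)).
  set (dphi := fun s => q1 * pd1 u (0 + s * q1, 0 + s * q2) + q2 * pd2 u (0 + s * q1, 0 + s * q2)).
  set (d2phi := fun s => q1 * (q1 * pd1 (pd1 u) (0 + s * q1, 0 + s * q2) + q2 * pd2 (pd1 u) (0 + s * q1, 0 + s * q2))
   + q2 * (q1 * pd1 (pd2 u) (0 + s * q1, 0 + s * q2) + q2 * pd2 (pd2 u) (0 + s * q1, 0 + s * q2))).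
  destruct (MVT_cor2 phi dphi 0 1 ltac:(lra)) as [c [Hc1 Hc2]].
  { intros c Hc'. apply (chain r). do 2 apply Ck_S; exact H4. apply Hin; auto. }
  destruct (MVT_cor2 dphi d2phi 0 c ltac:(lra)) as [xi [Hx1 Hx2]].
  { intros c' Hc'. apply (d2_line r). exact H4. apply Hin; lra. }
  assert (Hpos : 0 < d2phi xi).
  { unfold d2phi. apply (hess_pos r); auto. apply Hin; lra. apply Hdet, Hin; lra. }
  assert (E0 : phi 0 = 0).
  { unfold phi. replace (0 + 0 * q1, 0 + 0 * q2) with (0, 0) by (f_equal; ring). exact Hu0. }
  assert (E1 : dphi 0 = 0).
  { unfold dphi. replace (0 + 0 * q1, 0 + 0 * q2) with (0, 0) by (f_equal; ring). rewrite Hp1, Hp2; ring. }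
  assert (E2 : phi 1 = u (q1, q2)).
  { unfold phi. f_equal. f_equal; ring. }
  rewrite <- E2. rewrite E0, E1 in *. nra.
Qed.
Lemma comp_cont (f : R -> R -> R) g1 g2 s :
  continuity_2d_pt f (g1 s) (g2 s) ->
  continuity_pt g1 s -> continuity_pt g2 s -> continuity_pt (fun t => f (g1 t) (g2 t)) s.
Proof.
  intros Hf H1 H2 eps Heps.
  destruct (Hf (mkposreal eps Heps)) as [d Hd].
  destruct (H1 d (cond_pos d)) as [a1 [Ha1 K1]].
  destruct (H2 d (cond_pos d)) as [a2 [Ha2 K2]].
  exists (Rmin a1 a2). split. apply Rmin_pos; auto.
  intros x [Hx Hxd]. simpl in *. unfold R_dist in *.
  destruct (Req_dec s x) as [->|Hne].
  - unfold Rminus. rewrite Rplus_opp_r, Rabs_R0. auto.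
  - apply Hd.
    + apply K1. split. exact Hx. apply Rlt_le_trans with (1 := Hxd); apply Rmin_l.
    + apply K2. split. exact Hx. apply Rlt_le_trans with (1 := Hxd); apply Rmin_r.
Qed.

Lemma arc_cont r c sg s : -r <= s <= r ->
  continuity_pt (fun t => c * (sg * sqrt (r ^ 2 - t ^ 2))) s.
Proof.
  intros Hs.
  apply continuity_pt_scal. apply continuity_pt_scal.
  apply (continuity_pt_comp (fun t => r ^ 2 - t ^ 2) sqrt).
  - apply derivable_continuous_pt. reg.
  - apply continuity_pt_sqrt. nra.
Qed.

Lemma sphere_param r p1 p2 : 0 < r -> p1 ^ 2 + p2 ^ 2 = r ^ 2 ->
  -r <= p1 <= r /\ exists sg, (sg = 1 \/ sg = -1) /\ p2 = sg * sqrt (r ^ 2 - p1 ^ 2).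
Proof.
  intros Hr H. split. nra.
  replace (r ^ 2 - p1 ^ 2) with (p2 ^ 2) by lra.
  rewrite <- Rsqr_pow2, sqrt_Rsqr_abs.
  destruct (Rle_lt_dec 0 p2).
  - exists 1. split; auto. rewrite Rabs_right; lra.
  - exists (-1). split; auto. rewrite Rabs_left; lra.
Qed.

Lemma arc_min1 (G : R -> R -> R) c r sg : 0 < r -> (sg = 1 \/ sg = -1) ->
  (forall p1 p2, p1 ^ 2 + p2 ^ 2 = r ^ 2 -> continuity_2d_pt G (c * p1) (c * p2)) ->
  exists s0, -r <= s0 <= r /\ forall s, -r <= s <= r ->
    G (c * s0) (c * (sg * sqrt (r ^ 2 - s0 ^ 2))) <= G (c * s) (c * (sg * sqrt (r ^ 2 - s ^ 2))).
Proof.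
  intros Hr Hsg Hc.
  destruct (continuity_ab_min (fun s => G (c * s) (c * (sg * sqrt (r ^ 2 - s ^ 2)))) (-r) r ltac:(lra))
    as [s0 [H1 H2]].
  { intros s Hs.
    apply (comp_cont G (fun t => c * t) (fun t => c * (sg * sqrt (r ^ 2 - t ^ 2)))).
    - apply Hc. rewrite Rmult_comm, Rpow_mult_distr, <- Rsqr_pow2 with (x := sqrt _), Rsqr_sqrt by nra.
      destruct Hsg; subst; lra.
    - apply continuity_pt_scal. apply continuity_pt_id.
    - apply arc_cont; auto. }
  exists s0. split; auto.
Qed.

Lemma arc_min (G : R -> R -> R) c r : 0 < r ->
  (forall p1 p2, p1 ^ 2 + p2 ^ 2 = r ^ 2 -> continuity_2d_pt G (c * p1) (c * p2)) ->
  exists q1 q2, q1 ^ 2 + q2 ^ 2 = r ^ 2 /\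
    forall p1 p2, p1 ^ 2 + p2 ^ 2 = r ^ 2 -> G (c * q1) (c * q2) <= G (c * p1) (c * p2).
Proof.
  intros Hr Hc.
  destruct (arc_min1 G c r 1 Hr (or_introl eq_refl) Hc) as [s1 [Hs1 K1]].
  destruct (arc_min1 G c r (-1) Hr (or_intror eq_refl) Hc) as [s2 [Hs2 K2]].
  assert (Hon : forall s sg, -r <= s <= r -> (sg = 1 \/ sg = -1) ->
     s ^ 2 + (sg * sqrt (r ^ 2 - s ^ 2)) ^ 2 = r ^ 2).
  { intros s sg Hs Hsg. rewrite Rpow_mult_distr, <- Rsqr_pow2 with (x := sqrt _), Rsqr_sqrt by nra.
    destruct Hsg; subst; lra. }
  assert (Hall : forall p1 p2, p1 ^ 2 + p2 ^ 2 = r ^ 2 ->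
     Rmin (G (c * s1) (c * (1 * sqrt (r ^ 2 - s1 ^ 2)))) (G (c * s2) (c * (-1 * sqrt (r ^ 2 - s2 ^ 2))))
     <= G (c * p1) (c * p2)).
  { intros p1 p2 Hp. destruct (sphere_param r p1 p2 Hr Hp) as [Hp1 [sg [Hsg ->]]].
    destruct Hsg as [->| ->].
    - eapply Rle_trans. apply Rmin_l. apply K1; auto.
    - eapply Rle_trans. apply Rmin_r. apply K2; auto. }
  destruct (Rle_dec (G (c * s1) (c * (1 * sqrt (r ^ 2 - s1 ^ 2)))) (G (c * s2) (c * (-1 * sqrt (r ^ 2 - s2 ^ 2))))).
  - exists s1, (1 * sqrt (r ^ 2 - s1 ^ 2)). split. apply Hon; auto.
    intros p1 p2 Hp. rewrite <- (Rmin_left _ _ r0). apply Hall; auto.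
  - exists s2, (-1 * sqrt (r ^ 2 - s2 ^ 2)). split. apply Hon; auto.
    intros p1 p2 Hp. assert (Hle : G (c * s2) (c * (-1 * sqrt (r ^ 2 - s2 ^ 2))) <= G (c * s1) (c * (1 * sqrt (r ^ 2 - s1 ^ 2)))) by lra. rewrite <- (Rmin_right _ _ Hle). apply Hall; auto.
Qed.

Lemma arc_max (G : R -> R -> R) c r : 0 < r ->
  (forall p1 p2, p1 ^ 2 + p2 ^ 2 = r ^ 2 -> continuity_2d_pt G (c * p1) (c * p2)) ->
  exists M, forall p1 p2, p1 ^ 2 + p2 ^ 2 = r ^ 2 -> G (c * p1) (c * p2) <= M.
Proof.
  intros Hr Hc.
  destruct (arc_min (fun a b => - G a b) c r Hr) as [q1 [q2 [_ H]]].
  { intros p1 p2 Hp eps. destruct (Hc p1 p2 Hp eps) as [d Hd]. exists d.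
    intros u v Hu Hv. specialize (Hd u v Hu Hv).
    replace (- G u v - - G (c * p1) (c * p2)) with (- (G u v - G (c * p1) (c * p2))) by ring.
    rewrite Rabs_Ropp. auto. }
  exists (G (c * q1) (c * q2)). intros p1 p2 Hp. specialize (H p1 p2 Hp). cbv beta in H. lra.
Qed.
Lemma glb_fin (T : R -> Prop) lb x0 : T x0 -> (forall y, T y -> lb <= y) ->
  exists m, Glb_Rbar T = Finite m /\ lb <= m /\ forall y, T y -> m <= y.
Proof.
  intros Hx Hl. destruct (Glb_Rbar_correct T) as [H1 H2].
  assert (A : Rbar_le (Finite lb) (Glb_Rbar T)) by (apply H2; intros y Hy; simpl; auto).
  assert (B : Rbar_le (Glb_Rbar T) (Finite x0)) by (apply H1; auto).
  destruct (Glb_Rbar T) as [m| |] eqn:E; simpl in A, B. all: try contradiction.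
  exists m. split; [reflexivity|]. split; [assumption|]. intros y Hy. specialize (H1 y Hy). exact H1.
Qed.

Lemma lub_fin (T : R -> Prop) ub x0 : T x0 -> (forall y, T y -> y <= ub) ->
  exists m, Lub_Rbar T = Finite m /\ m <= ub /\ forall y, T y -> y <= m.
Proof.
  intros Hx Hl. destruct (Lub_Rbar_correct T) as [H1 H2].
  assert (A : Rbar_le (Lub_Rbar T) (Finite ub)) by (apply H2; intros y Hy; simpl; auto).
  assert (B : Rbar_le (Finite x0) (Lub_Rbar T)) by (apply H1; auto).
  destruct (Lub_Rbar T) as [m| |] eqn:E; simpl in A, B. all: try contradiction.
  exists m. split; [reflexivity|]. split; [assumption|]. intros y Hy. specialize (H1 y Hy). exact H1.
Qed.

Lemma min_deriv0 f a b c l : a < c < b -> (forall x, a < x < b -> f c <= f x) ->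
  derivable_pt_lim f c l -> l = 0.
Proof.
  intros Hc Hm Hl.
  pose (pr := exist (fun l => derivable_pt_abs f c l) l Hl : derivable_pt f c).
  pose proof (deriv_minimum f a b c pr ltac:(lra) ltac:(lra) ltac:(intros; apply Hm; lra)) as K.
  exact K.
Qed.

Lemma abs_le_r r a b : 0 < r -> a ^ 2 + b ^ 2 = r ^ 2 -> Rabs a <= r.
Proof.
  intros Hr H. apply Rabs_le. nra.
Qed.

Lemma half_bound r u p1 p2 : 0 < r -> convex_on (in_ball r) u -> u (0, 0) = 0 ->
  continuity_2d_pt (fun a b => u (a, b)) p1 p2 -> p1 ^ 2 + p2 ^ 2 = r ^ 2 ->
  2 * u (1/2 * p1, 1/2 * p2) <= u (p1, p2).
Proof.
  intros Hr Hc Hu0 Hct Hp.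
  apply Rnot_lt_le. intro Hlt.
  set (e := 2 * u (1/2 * p1, 1/2 * p2) - u (p1, p2)).
  assert (He : 0 < e) by (unfold e; lra).
  set (U := Rabs (u (1/2 * p1, 1/2 * p2))).
  assert (HU : 0 <= U) by apply Rabs_pos.
  destruct (Hct (mkposreal (e/2) ltac:(lra))) as [del Hdel]. simpl in Hdel.
  pose proof (cond_pos del) as Hd.
  set (eta := Rmin (1/4) (Rmin (del / (2 * (r + 1))) (e / (8 * (U + 1))))).
  assert (He1 : eta <= 1/4) by apply Rmin_l.
  assert (He2 : eta <= del / (2 * (r + 1))) by (eapply Rle_trans; [apply Rmin_r|apply Rmin_l]).
  assert (He3 : eta <= e / (8 * (U + 1))) by (eapply Rle_trans; [apply Rmin_r|apply Rmin_r]).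
  assert (He0 : 0 < eta).
  { unfold eta. repeat apply Rmin_pos; try lra; apply Rdiv_lt_0_compat; lra. }
  set (t := 1 - eta).
  assert (Ht : 3/4 <= t < 1) by (unfold t; lra).
  assert (Hin : in_ball r (t * p1, t * p2)).
  { unfold in_ball; cbn [fst snd].
    replace ((t * p1) ^ 2 + (t * p2) ^ 2) with (t ^ 2 * (p1 ^ 2 + p2 ^ 2)) by ring.
    rewrite Hp. assert (t ^ 2 < 1) by nra. assert (0 < r ^ 2) by nra. nra. }
  assert (H0 : in_ball r (0, 0)) by (unfold in_ball; cbn [fst snd]; nra).
  assert (Hl : 0 <= 1 / (2 * t) <= 1).
  { split. apply Rlt_le, Rdiv_lt_0_compat; lra.
    apply Rmult_le_reg_r with (2 * t). lra. field_simplify; lra. }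
  pose proof (Hc _ _ _ Hin H0 Hl) as K. simpl in K.
  replace (1 / (2 * t) * (t * p1) + (1 - 1 / (2 * t)) * 0, 1 / (2 * t) * (t * p2) + (1 - 1 / (2 * t)) * 0)
    with (1/2 * p1, 1/2 * p2) in K by (f_equal; field; lra).
  rewrite Hu0 in K.
  assert (K2 : 2 * t * u (1/2 * p1, 1/2 * p2) <= u (t * p1, t * p2)).
  { apply Rmult_le_reg_r with (/ (2 * t)). apply Rinv_0_lt_compat; lra.
    replace (2 * t * u (1 / 2 * p1, 1 / 2 * p2) * / (2 * t)) with (u (1 / 2 * p1, 1 / 2 * p2)) by (field; lra).
    lra. }
  assert (Hp1 : Rabs p1 <= r) by (apply (abs_le_r r p1 p2); auto).
  assert (Hp2 : Rabs p2 <= r) by (apply (abs_le_r r p2 p1); auto; lra).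
  assert (Hetar : eta * (r + 1) < del).
  { apply Rle_lt_trans with (del / (2 * (r + 1)) * (r + 1)).
    apply Rmult_le_compat_r; lra. field_simplify; lra. }
  assert (D1 : Rabs (t * p1 - p1) < del).
  { replace (t * p1 - p1) with (- eta * p1) by (unfold t; ring).
    rewrite Rabs_mult, Rabs_Ropp, Rabs_right by lra. nra. }
  assert (D2 : Rabs (t * p2 - p2) < del).
  { replace (t * p2 - p2) with (- eta * p2) by (unfold t; ring).
    rewrite Rabs_mult, Rabs_Ropp, Rabs_right by lra. nra. }
  specialize (Hdel _ _ D1 D2).
  apply Rabs_def2 in Hdel.
  assert (HeU : eta * U * 8 <= e).
  { apply Rle_trans with (e / (8 * (U + 1)) * U * 8).
    apply Rmult_le_compat_r. lra. apply Rmult_le_compat_r; lra.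
    apply Rmult_le_reg_r with (U + 1). lra.
    field_simplify; nra. }
  assert (Hb : u (1/2 * p1, 1/2 * p2) <= U) by apply Rle_abs.
  assert (eta * u (1/2 * p1, 1/2 * p2) <= eta * U) by (apply Rmult_le_compat_l; lra).
  destruct Hdel. unfold e in *. clear K.
  set (w := u (1 / 2 * p1, 1 / 2 * p2)) in *. set (up := u (p1, p2)) in *.
  set (ut := u (t * p1, t * p2)) in *.
  assert (A1 : 2 * t * w = 2 * w - 2 * (eta * w)) by (unfold t; ring).
  assert (A3 : eta * U * 8 = 8 * (eta * U)) by ring.
  rewrite A1 in K2. rewrite A3 in HeU. clear A1 A3.
  set (ew := eta * w) in *. set (eU := eta * U) in *. clearbody ew eU w up ut.
  lra.
Qed.

Lemma vert r u sg a : 0 < r -> (sg = 1 \/ sg = -1) -> Ck 4 (in_ball r) u ->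
  convex_on (in_ball r) u -> u (0, 0) = 0 ->
  continuity_2d_pt (fun x y => pd2 u (x, y)) 0 (sg * r) -> 0 <= a < r ->
  u (0, sg * a) <= a * Rabs (pd2 u (0, sg * r)).
Proof.
  intros Hr Hsg H4 Hc Hu0 Hct Ha.
  assert (Hsg2 : sg * sg = 1) by (destruct Hsg; subst; ring).
  assert (Hin : forall t, -r < t < r -> in_ball r (0 + t * 0, 0 + t * sg)).
  { intros t Ht. unfold in_ball; cbn [fst snd].
    replace ((0 + t * 0) ^ 2 + (0 + t * sg) ^ 2) with (t * t * (sg * sg)) by ring.
    rewrite Hsg2. nra. }
  set (phi := fun t => u (0 + t * 0, 0 + t * sg)).
  set (dphi := fun t => 0 * pd1 u (0 + t * 0, 0 + t * sg) + sg * pd2 u (0 + t * 0, 0 + t * sg)).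
  assert (Hconv : conv1 phi (-r) r) by (apply (conv_line r); auto).
  assert (Hd : forall t, -r < t < r -> derivable_pt_lim phi t (dphi t)).
  { intros t Ht. apply (chain r). do 2 apply Ck_S; exact H4. apply Hin; auto. }
  assert (Ephi : phi a = u (0, sg * a)) by (unfold phi; f_equal; f_equal; ring).
  rewrite <- Ephi.
  destruct (Req_dec a 0) as [Ha0|Ha0].
  - subst a. unfold phi. replace (0 + 0 * 0, 0 + 0 * sg) with (0, 0) by (f_equal; ring).
    rewrite Hu0. pose proof (Rabs_pos (pd2 u (0, sg * r))). lra.
  - destruct (MVT_cor2 phi dphi 0 a ltac:(lra)) as [c [Hc1 Hc2]].
    { intros c Hc'. apply Hd. lra. }
    assert (E0 : phi 0 = 0).
    { unfold phi. replace (0 + 0 * 0, 0 + 0 * sg) with (0, 0) by (f_equal; ring). exact Hu0. }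
    set (L := Rabs (pd2 u (0, sg * r))).
    assert (Hbound : dphi c <= L).
    { apply Rnot_lt_le. intro Hlt.
      assert (Hsl : sg * pd2 u (0, sg * r) <= L).
      { unfold L. apply Rle_trans with (Rabs (sg * pd2 u (0, sg * r))). apply Rle_abs.
        rewrite Rabs_mult. destruct Hsg; subst; rewrite ?Rabs_R1, ?Rabs_m1; lra. }
      set (eps := dphi c - sg * pd2 u (0, sg * r)).
      assert (Heps : 0 < eps) by (unfold eps; lra).
      destruct (Hct (mkposreal eps Heps)) as [del Hdel]. simpl in Hdel.
      pose proof (cond_pos del) as Hdp.
      set (b := Rmax ((c + r) / 2) (r - del / 2)).
      assert (Hb1 : (c + r) / 2 <= b) by apply Rmax_l.
      assert (Hb2 : r - del / 2 <= b) by apply Rmax_r.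
      assert (Hb3 : b < r) by (apply Rmax_lub_lt; lra).
      assert (K1 : Rabs (0 + b * 0 - 0) < del) by (replace (0 + b * 0 - 0) with 0 by ring; rewrite Rabs_R0; lra).
      assert (K2 : Rabs (0 + b * sg - sg * r) < del).
      { replace (0 + b * sg - sg * r) with (sg * (b - r)) by ring.
        rewrite Rabs_mult, (Rabs_left (b - r)) by lra. destruct Hsg; subst; rewrite ?Rabs_R1, ?Rabs_m1; lra. }
      specialize (Hdel _ _ K1 K2).
      assert (Hm : dphi c <= dphi b).
      { apply (conv1_mono phi (-r) r c b (dphi c) (dphi b)). exact Hconv. split; lra. split; lra. lra. apply Hd; lra. apply Hd; lra. }
      assert (Hq : sg * pd2 u (0 + b * 0, 0 + b * sg) - sg * pd2 u (0, sg * r) < eps).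
      { apply Rle_lt_trans with (2 := Hdel). rewrite <- Rmult_minus_distr_l.
        apply Rle_trans with (Rabs (sg * (pd2 u (0 + b * 0, 0 + b * sg) - pd2 u (0, sg * r)))).
        apply Rle_abs. rewrite Rabs_mult. destruct Hsg; subst; rewrite ?Rabs_R1, ?Rabs_m1; lra. }
      unfold dphi at 2 in Hm. unfold eps in Hq. lra. }
    rewrite E0 in Hc1. assert (0 < a) by lra.
    assert (dphi c * a <= L * a) by (apply Rmult_le_compat_r; lra). lra.
Qed.

Lemma vert_lim r u sg : 0 < r -> (sg = 1 \/ sg = -1) ->
  continuity_2d_pt (fun x y => u (x, y)) 0 (sg * r) ->
  (forall a, 0 <= a < r -> u (0, sg * a) <= a * Rabs (pd2 u (0, sg * r))) ->
  u (0, sg * r) <= r * Rabs (pd2 u (0, sg * r)).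
Proof.
  intros Hr Hsg Hct Hv. set (L := Rabs (pd2 u (0, sg * r))).
  assert (HL : 0 <= L) by apply Rabs_pos.
  apply Rnot_lt_le. intro Hlt.
  set (eps := (u (0, sg * r) - r * L) / 2).
  assert (He : 0 < eps) by (unfold eps; lra).
  destruct (Hct (mkposreal eps He)) as [del Hdel]. simpl in Hdel.
  pose proof (cond_pos del) as Hdp.
  set (a := Rmax (r / 2) (r - del / 2)).
  assert (Ha1 : r / 2 <= a) by apply Rmax_l.
  assert (Ha2 : r - del / 2 <= a) by apply Rmax_r.
  assert (Ha3 : a < r) by (apply Rmax_lub_lt; lra).
  assert (K1 : Rabs (0 - 0) < del) by (rewrite Rminus_0_r, Rabs_R0; lra).
  assert (K2 : Rabs (sg * a - sg * r) < del).
  { replace (sg * a - sg * r) with (sg * (a - r)) by ring.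
    rewrite Rabs_mult, (Rabs_left (a - r)) by lra. destruct Hsg; subst; rewrite ?Rabs_R1, ?Rabs_m1; lra. }
  specialize (Hdel _ _ K1 K2). apply Rabs_def2 in Hdel. destruct Hdel as [_ Hd2].
  specialize (Hv a ltac:(lra)).
  assert (a * L <= r * L) by (apply Rmult_le_compat_r; lra).
  unfold eps in Hd2. fold L in Hv. lra.
Qed.

Lemma mc_elem r u p1 p2 eps : 0 < r -> Ck 4 (in_ball r) u -> convex_on (in_ball r) u ->
  u (0, 0) = 0 -> pd1 u (0, 0) = 0 -> pd2 u (0, 0) = 0 ->
  (forall x, in_ball r x -> 0 <= u x) ->
  continuity_2d_pt (fun x y => u (x, y)) p1 p2 -> p1 ^ 2 + p2 ^ 2 = r ^ 2 -> 0 < eps ->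
  exists x z, in_ball r x /\ in_ball r z /\ enorm (fst x - fst z, snd x - snd z) > r /\
    u x - ell u z x <= u (p1, p2) + eps.
Proof.
  intros Hr H4 Hc Hu0 Hp10 Hp20 Hnn Hct Hp He.
  assert (Hin : forall t, -1 < t < 1 -> in_ball r (0 + t * p1, 0 + t * p2)).
  { intros t Ht. unfold in_ball; cbn [fst snd].
    replace ((0 + t * p1) ^ 2 + (0 + t * p2) ^ 2) with (t ^ 2 * (p1 ^ 2 + p2 ^ 2)) by ring.
    rewrite Hp. assert (t ^ 2 < 1) by nra. assert (0 < r ^ 2) by nra. nra. }
  set (phi := fun t => u (0 + t * p1, 0 + t * p2)).
  set (dphi := fun t => p1 * pd1 u (0 + t * p1, 0 + t * p2) + p2 * pd2 u (0 + t * p1, 0 + t * p2)).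
  assert (Hconv : conv1 phi (-1) 1) by (apply (conv_line r); auto).
  assert (Hd : forall t, -1 < t < 1 -> derivable_pt_lim phi t (dphi t)).
  { intros t Ht. apply (chain r). do 2 apply Ck_S; exact H4. apply Hin; auto. }
  assert (E0 : phi 0 = 0).
  { unfold phi. replace (0 + 0 * p1, 0 + 0 * p2) with (0, 0) by (f_equal; ring). exact Hu0. }
  assert (ED0 : dphi 0 = 0).
  { unfold dphi. replace (0 + 0 * p1, 0 + 0 * p2) with (0, 0) by (f_equal; ring). rewrite Hp10, Hp20; ring. }
  destruct (deriv_lower phi 0 (dphi 0) (eps / 8) (Hd 0 ltac:(lra)) ltac:(lra)) as [d1 [Hd1 K1]].
  destruct (Hct (mkposreal (eps / 2) ltac:(lra))) as [d2 Hd2]. simpl in Hd2.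
  pose proof (cond_pos d2) as Hd2p.
  set (mu := Rmin (1/4) (Rmin (d1 / 4) (d2 / (r + 1)))).
  assert (Hm1 : mu <= 1/4) by apply Rmin_l.
  assert (Hm2 : mu <= d1 / 4) by (eapply Rle_trans; [apply Rmin_r|apply Rmin_l]).
  assert (Hm3 : mu <= d2 / (r + 1)) by (eapply Rle_trans; [apply Rmin_r|apply Rmin_r]).
  assert (Hm0 : 0 < mu).
  { unfold mu. repeat apply Rmin_pos; try lra; apply Rdiv_lt_0_compat; lra. }
  set (lam := 1 - mu / 2).
  assert (Ha : phi (-2 * mu) < eps * mu / 4).
  { assert (Hh : -2 * mu <> 0) by lra.
    assert (Hh2 : Rabs (-2 * mu) < d1) by (rewrite Rabs_left by lra; lra).
    destruct (K1 _ Hh Hh2) as [_ K]. rewrite ED0, E0 in K.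
    replace (0 + -2 * mu) with (-2 * mu) in K by ring.
    rewrite Rabs_left in K by lra. lra. }
  assert (Hb : - eps / 4 < dphi (- mu)).
  { pose proof (conv1_grad phi (-1) 1 (- mu) (-2 * mu) (dphi (- mu)) Hconv ltac:(lra) ltac:(lra)
      (Hd (- mu) ltac:(lra))) as G.
    assert (0 <= phi (- mu)) by (apply Hnn, Hin; lra).
    assert (mu * dphi (- mu) > mu * (- eps / 4)) by nra.
    apply Rmult_gt_reg_l with mu; lra. }
  assert (Hc0 : 0 <= phi (- mu)) by (apply Hnn, Hin; lra).
  assert (Hp1 : Rabs p1 <= r) by (apply (abs_le_r r p1 p2); auto).
  assert (Hp2 : Rabs p2 <= r) by (apply (abs_le_r r p2 p1); auto; lra).
  assert (Hmr : mu * (r + 1) <= d2).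
  { apply Rle_trans with (d2 / (r + 1) * (r + 1)). apply Rmult_le_compat_r; lra. right; field; lra. }
  assert (Hdd : Rabs (phi lam - u (p1, p2)) < eps / 2).
  { unfold phi. apply Hd2.
    - replace (0 + lam * p1 - p1) with (- (mu / 2) * p1) by (unfold lam; ring).
      rewrite Rabs_mult, Rabs_left by lra. nra.
    - replace (0 + lam * p2 - p2) with (- (mu / 2) * p2) by (unfold lam; ring).
      rewrite Rabs_mult, Rabs_left by lra. nra. }
  exists (0 + lam * p1, 0 + lam * p2), (0 + - mu * p1, 0 + - mu * p2).
  split. apply Hin; unfold lam; lra.
  split. apply Hin; lra.
  split.
  - unfold enorm; cbn [fst snd].
    replace ((0 + lam * p1 - (0 + - mu * p1)) ^ 2 + (0 + lam * p2 - (0 + - mu * p2)) ^ 2)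
      with ((lam + mu) ^ 2 * (p1 ^ 2 + p2 ^ 2)) by ring.
    rewrite Hp. unfold Rgt. rewrite <- (sqrt_pow2 r) at 1 by lra. apply sqrt_lt_1_alt.
    split. nra. unfold lam. assert (0 < r ^ 2) by nra. assert (1 < (1 - mu / 2 + mu) ^ 2) by nra. nra.
  - assert (Ev : u (0 + lam * p1, 0 + lam * p2) - ell u (0 + - mu * p1, 0 + - mu * p2) (0 + lam * p1, 0 + lam * p2)
       = phi lam - phi (- mu) - (lam + mu) * dphi (- mu)).
    { unfold ell, phi, dphi; cbn [fst snd]. ring. }
    rewrite Ev. apply Rabs_def2 in Hdd. destruct Hdd as [Hdd _].
    assert ((lam + mu) * dphi (- mu) > (lam + mu) * (- eps / 4)) by (apply Rmult_gt_compat_l; unfold lam; lra).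
    unfold lam in *. nra.
Qed.

Lemma enorm_le a b : enorm (a, b) <= Rabs a + Rabs b.
Proof.
  unfold enorm; cbn [fst snd].
  rewrite <- (sqrt_pow2 (Rabs a + Rabs b)) by (pose proof (Rabs_pos a); pose proof (Rabs_pos b); lra).
  apply sqrt_le_1_alt.
  pose proof (Rabs_pos a); pose proof (Rabs_pos b).
  rewrite <- (pow2_abs a) at 1. rewrite <- (pow2_abs b) at 1. nra.
Qed.

Lemma abs_le_enorm2 a b : Rabs b <= enorm (a, b).
Proof.
  unfold enorm; cbn [fst snd].
  rewrite <- (sqrt_pow2 (Rabs b)) by apply Rabs_pos.
  apply sqrt_le_1_alt. rewrite pow2_abs. pose proof (pow2_ge_0 a). lra.
Qed.

Lemma abs_le_enorm1 a b : Rabs a <= enorm (a, b).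
Proof.
  unfold enorm; cbn [fst snd].
  rewrite <- (sqrt_pow2 (Rabs a)) by apply Rabs_pos.
  apply sqrt_le_1_alt. rewrite pow2_abs. pose proof (pow2_ge_0 b). lra.
Qed.

Lemma cb_of r p1 p2 : p1 ^ 2 + p2 ^ 2 <= r ^ 2 -> in_ball r (p1, p2) \/ on_sphere r (p1, p2).
Proof.
  unfold in_ball, on_sphere; cbn [fst snd]. intros [H|H]; auto.
Qed.

Theorem lemma2p1 (r C0 : R) (u f : pt -> R) :
  0 < r ->
  Ck 4 (in_ball r) u ->
  (* u is C^1 up to the boundary *)
  Ck 1 (fun x => in_ball r x \/ on_sphere r x) u ->
  convex_on (in_ball r) u ->
  (forall x, in_ball r x -> detHess u x = f x) ->
  (forall x, in_ball r x -> / C0 <= f x <= C0) ->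
  0 < C0 ->
  u (0, 0) = 0 -> pd1 u (0, 0) = 0 -> pd2 u (0, 0) = 0 ->
  0 < delta r u /\
  Rbar_le (modconv r u r) (Finite (m0 r u)) /\
  (forall y : pt, enorm y < delta r u ->
     exists x, in_ball r x /\ Pmap u x = y).
Proof.
  intros Hr H4 H1c Hc Hdet Hf HC0 Hu0 Hp10 Hp20.
  assert (Hdpos : forall x, in_ball r x -> 0 < detHess u x).
  { intros x Hx. rewrite Hdet by auto. destruct (Hf x Hx) as [A _].
    pose proof (Rinv_0_lt_compat _ HC0). lra. }
  destruct H1c as [Hcu [Hdx [Hc1 Hc2]]]. cbn in Hc1, Hc2.
  assert (Hcont_u : forall p1 p2, p1 ^ 2 + p2 ^ 2 <= r ^ 2 -> continuity_2d_pt (fun a b => u (a, b)) p1 p2).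
  { intros p1 p2 Hp. exact (cont_2d u (p1, p2) (Hcu _ (cb_of r p1 p2 Hp))). }
  assert (Hcont_1 : forall p1 p2, p1 ^ 2 + p2 ^ 2 <= r ^ 2 -> continuity_2d_pt (fun a b => pd1 u (a, b)) p1 p2).
  { intros p1 p2 Hp. exact (cont_2d (pd1 u) (p1, p2) (Hc1 _ (cb_of r p1 p2 Hp))). }
  assert (Hcont_2 : forall p1 p2, p1 ^ 2 + p2 ^ 2 <= r ^ 2 -> continuity_2d_pt (fun a b => pd2 u (a, b)) p1 p2).
  { intros p1 p2 Hp. exact (cont_2d (pd2 u) (p1, p2) (Hc2 _ (cb_of r p1 p2 Hp))). }
  assert (Hnn : forall x, in_ball r x -> 0 <= u x).
  { intros [x1 x2] Hx. destruct (Req_dec x1 0) as [->|H1]; [destruct (Req_dec x2 0) as [->|H2]|].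
    - rewrite Hu0; lra.
    - apply Rlt_le, (u_pos r); auto.
    - apply Rlt_le, (u_pos r); auto. }
  assert (Hr2 : 0 < r ^ 2) by nra.
  destruct (arc_min (fun a b => u (a, b)) (1/2) r Hr) as [q1 [q2 [Hq Hqmin]]].
  { intros p1 p2 Hp. apply Hcont_u. nra. }
  set (kq := u (1/2 * q1, 1/2 * q2)).
  assert (Hkq : 0 < kq).
  { unfold kq. apply (u_pos r); auto. unfold in_ball; cbn [fst snd]. nra.
    destruct (Req_dec q1 0); [right; intro; nra | left; lra]. }
  assert (Hsph : forall p1 p2, p1 ^ 2 + p2 ^ 2 = r ^ 2 -> 2 * kq <= u (p1, p2)).
  { intros p1 p2 Hp. specialize (Hqmin p1 p2 Hp). cbv beta in Hqmin.
    pose proof (half_bound r u p1 p2 Hr Hc Hu0 (Hcont_u p1 p2 ltac:(lra)) Hp). unfold kq. lra. }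
  destruct (glb_fin (fun y => exists x, on_sphere r x /\ y = u x) (2 * kq) (u (r, 0))) as [m [Hm1 [Hm2 Hm3]]].
  { exists (r, 0). split; auto. unfold on_sphere; cbn [fst snd]. ring. }
  { intros y [[x1 x2] [Hx ->]]. apply Hsph. exact Hx. }
  assert (Em : m0 r u = m) by (unfold m0; rewrite Hm1; reflexivity).
  assert (Hmle : forall p1 p2, p1 ^ 2 + p2 ^ 2 = r ^ 2 -> m <= u (p1, p2)).
  { intros p1 p2 Hp. apply Hm3. exists (p1, p2). split; auto. }
  assert (Hc1' : forall p1 p2, p1 ^ 2 + p2 ^ 2 = r ^ 2 -> continuity_2d_pt (fun a b => pd1 u (a, b)) (1 * p1) (1 * p2)).
  { intros p1 p2 Hp. rewrite !Rmult_1_l. apply Hcont_1. lra. }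
  assert (Hc2' : forall p1 p2, p1 ^ 2 + p2 ^ 2 = r ^ 2 -> continuity_2d_pt (fun a b => pd2 u (a, b)) (1 * p1) (1 * p2)).
  { intros p1 p2 Hp. rewrite !Rmult_1_l. apply Hcont_2. lra. }
  destruct (arc_min _ 1 r Hr Hc1') as [a1 [b1 [_ L1]]].
  destruct (arc_max _ 1 r Hr Hc1') as [M1 U1].
  destruct (arc_min _ 1 r Hr Hc2') as [a2 [b2 [_ L2]]].
  destruct (arc_max _ 1 r Hr Hc2') as [M2 U2].
  set (K := Rabs (pd1 u (1 * a1, 1 * b1)) + Rabs M1 + Rabs (pd2 u (1 * a2, 1 * b2)) + Rabs M2).
  destruct (lub_fin (fun y => exists x, on_sphere r x /\ y = enorm (pd1 u x, pd2 u x)) K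
    (enorm (pd1 u (r, 0), pd2 u (r, 0)))) as [D [HD1 [_ HD3]]].
  { exists (r, 0). split; auto. unfold on_sphere; cbn [fst snd]. ring. }
  { intros y [[x1 x2] [Hx ->]]. unfold on_sphere in Hx; cbn [fst snd] in Hx.
    eapply Rle_trans. apply enorm_le.
    specialize (L1 x1 x2 Hx). specialize (U1 x1 x2 Hx). specialize (L2 x1 x2 Hx). specialize (U2 x1 x2 Hx).
    cbv beta in *. repeat rewrite Rmult_1_l in L1. repeat rewrite Rmult_1_l in L2. repeat rewrite Rmult_1_l in U1. repeat rewrite Rmult_1_l in U2.
    unfold K. rewrite !Rmult_1_l.
    assert (Rabs (pd1 u (x1, x2)) <= Rabs (pd1 u (a1, b1)) + Rabs M1).
    { apply Rabs_le. pose proof (Rle_abs M1). pose proof (Rle_abs (- pd1 u (a1, b1))).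
      rewrite Rabs_Ropp in *. pose proof (Rabs_pos M1). pose proof (Rabs_pos (pd1 u (a1, b1))). lra. }
    assert (Rabs (pd2 u (x1, x2)) <= Rabs (pd2 u (a2, b2)) + Rabs M2).
    { apply Rabs_le. pose proof (Rle_abs M2). pose proof (Rle_abs (- pd2 u (a2, b2))).
      rewrite Rabs_Ropp in *. pose proof (Rabs_pos M2). pose proof (Rabs_pos (pd2 u (a2, b2))). lra. }
    lra. }
  assert (ED : DuB r u = D) by (unfold DuB; rewrite HD1; reflexivity).
  assert (HDle : forall p1 p2, p1 ^ 2 + p2 ^ 2 = r ^ 2 -> Rabs (pd2 u (p1, p2)) <= D).
  { intros p1 p2 Hp. eapply Rle_trans. apply abs_le_enorm2. apply HD3. exists (p1, p2). split; auto. }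
  assert (Hv : forall sg a, (sg = 1 \/ sg = -1) -> 0 <= a < r -> u (0, sg * a) <= a * D).
  { intros sg a Hsg Ha.
    assert (Hs : 0 ^ 2 + (sg * r) ^ 2 = r ^ 2) by (destruct Hsg; subst; ring).
    eapply Rle_trans. apply (vert r u sg a Hr Hsg H4 Hc Hu0); auto. apply Hcont_2. lra.
    apply Rmult_le_compat_l. lra. apply HDle. auto. }
  assert (HmD : m <= r * D).
  { assert (Hs : 0 ^ 2 + (1 * r) ^ 2 = r ^ 2) by ring.
    pose proof (vert_lim r u 1 Hr (or_introl eq_refl) (Hcont_u 0 (1 * r) ltac:(lra))) as V.
    assert (V2 : u (0, 1 * r) <= r * Rabs (pd2 u (0, 1 * r))).
    { apply V. intros a Ha. apply (vert r u 1 a Hr (or_introl eq_refl) H4 Hc Hu0); auto. apply Hcont_2. lra. }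
    pose proof (Hmle 0 (1 * r) Hs). pose proof (HDle 0 (1 * r) Hs).
    assert (r * Rabs (pd2 u (0, 1 * r)) <= r * D) by (apply Rmult_le_compat_l; lra). lra. }
  assert (Hm0 : 0 < m) by lra.
  assert (HD0 : 0 < D).
  { destruct (Rle_lt_dec D 0); auto. assert (r * D <= 0) by nra. lra. }
  unfold delta. rewrite Em, ED.
  split; [|split].
  - apply Rmin_pos; apply Rdiv_lt_0_compat; lra.
  -
    unfold modconv.
    set (S' := fun y => exists x z, in_ball r x /\ in_ball r z /\
       enorm (fst x - fst z, snd x - snd z) > r /\ y = u x - ell u z x).
    assert (HS : forall p1 p2 eps, p1 ^ 2 + p2 ^ 2 = r ^ 2 -> 0 < eps ->
       Rbar_le (Glb_Rbar S') (Finite (u (p1, p2) + eps))).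
    { intros p1 p2 eps Hp He.
      destruct (mc_elem r u p1 p2 eps Hr H4 Hc Hu0 Hp10 Hp20 Hnn (Hcont_u p1 p2 ltac:(lra)) Hp He)
        as [x [z [Hx [Hz [Hn Hv']]]]].
      destruct (Glb_Rbar_correct S') as [Hlb _].
      apply Rbar_le_trans with (Finite (u x - ell u z x)).
      apply Hlb. exists x, z. repeat split; auto.
      simpl. exact Hv'. }
    destruct (Glb_Rbar_correct (fun y => exists x, on_sphere r x /\ y = u x)) as [_ Hgr].
    rewrite Hm1 in Hgr.
    destruct (Glb_Rbar S') as [g| |] eqn:Eg.
    + apply Hgr. intros y [[x1 x2] [Hx ->]]. simpl.
      apply Rnot_lt_le. intro Hlt.
      specialize (HS x1 x2 ((g - u (x1, x2)) / 2) Hx ltac:(lra)). simpl in HS. lra.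
    + exfalso. specialize (HS r 0 1 ltac:(ring) ltac:(lra)). simpl in HS. exact HS.
    + simpl. exact I.
  -
    intros [y1 y2] Hy.
    pose proof (abs_le_enorm1 y1 y2) as Ha1. pose proof (abs_le_enorm2 y1 y2) as Ha2.
    set (dl := Rmin (m / (2 * D)) (m / (2 * r))) in *.
    assert (Hd1 : dl <= m / (2 * D)) by apply Rmin_l.
    assert (Hd2 : dl <= m / (2 * r)) by apply Rmin_r.
    assert (Hy2D : Rabs y2 * D < m / 2).
    { apply Rlt_le_trans with (m / (2 * D) * D). apply Rmult_lt_compat_r; lra. right; field; lra. }
    assert (Hy1r : Rabs y1 * r < m / 2).
    { apply Rlt_le_trans with (m / (2 * r) * r). apply Rmult_lt_compat_r; lra. right; field; lra. }
    assert (Hy2r : Rabs y2 < r) by nra.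
    assert (Hy2s : y2 ^ 2 < r ^ 2).
    { rewrite <- (pow2_abs y2). pose proof (Rabs_pos y2). nra. }
    set (s := sqrt (r ^ 2 - y2 ^ 2)).
    assert (Hs2 : s ^ 2 = r ^ 2 - y2 ^ 2) by (unfold s; apply pow2_sqrt; lra).
    assert (Hs0 : 0 < s) by (unfold s; apply sqrt_lt_R0; lra).
    assert (Hsr : s <= r) by nra.
    set (h := fun t => u (t, y2) - (0 + t * y1)).
    destruct (continuity_ab_min h (-s) s ltac:(lra)) as [t0 [Ht0b Ht0]].
    { intros t Ht.
      assert (Hty : t ^ 2 + y2 ^ 2 <= r ^ 2) by nra.
      assert (Hcst : constant (fun _ : R => y2)) by (intros ? ?; reflexivity).
      pose proof (comp_cont (fun a b => u (a, b)) (fun t => t) (fun _ => y2) t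
        (Hcont_u t y2 Hty) (continuity_pt_id t) (continuity_pt_const (fun _ => y2) t Hcst)) as K1.
      pose proof (derivable_continuous_pt _ _ (exist _ y1 (lin_deriv 0 y1 t))) as K2.
      exact (continuity_pt_minus _ _ t K1 K2). }
    assert (Hhs : m / 2 < h s).
    { unfold h. pose proof (Hmle s y2 ltac:(lra)).
      assert (s * y1 <= Rabs y1 * r). { pose proof (Rle_abs y1). pose proof (Rabs_pos y1). nra. }
      lra. }
    assert (Hhms : m / 2 < h (- s)).
    { unfold h. pose proof (Hmle (- s) y2 ltac:(nra)).
      assert (- s * y1 <= Rabs y1 * r). { pose proof (Rle_abs (- y1)). rewrite Rabs_Ropp in *. pose proof (Rabs_pos y1). nra. }
      lra. }
    assert (Hh0 : h 0 < m / 2).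
    { unfold h. replace (0 + 0 * y1) with 0 by ring.
      destruct (Rle_lt_dec 0 y2).
      - pose proof (Hv 1 (Rabs y2) (or_introl eq_refl) ltac:(split; [apply Rabs_pos|lra])) as V.
        rewrite Rabs_right in V by lra. rewrite Rmult_1_l in V. rewrite Rabs_right in Hy2D by lra. lra.
      - pose proof (Hv (-1) (Rabs y2) (or_intror eq_refl) ltac:(split; [apply Rabs_pos|lra])) as V.
        rewrite Rabs_left in V by lra. replace (-1 * - y2) with y2 in V by ring.
        rewrite Rabs_left in Hy2D by lra. lra. }
    pose proof (Ht0b 0 ltac:(lra)) as Hmin0.
    assert (Ht0i : -s < t0 < s).
    { split; apply Rnot_le_lt; intro E.
      - assert (t0 = -s) by lra. subst t0. lra.
      - assert (t0 = s) by lra. subst t0. lra. }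
    assert (Hin : in_ball r (t0, y2)).
    { unfold in_ball; cbn [fst snd]. nra. }
    destruct (Hdx _ (or_introl Hin)) as [Hex _]. cbn [fst snd] in Hex.
    pose proof (proj1 (is_derive_Reals _ _ _) (Derive_correct _ _ Hex)) as Dd.
    pose proof (derivable_pt_lim_minus _ _ _ _ _ Dd (lin_deriv 0 y1 t0)) as Dh.
    assert (Z : Derive (fun t => u (t, y2)) t0 - y1 = 0).
    { apply (min_deriv0 h (-s) s t0); auto. intros x Hx. apply Ht0b. lra. }
    exists (t0, y2). split; auto.
    unfold Pmap, pd1; cbn [fst snd]. f_equal. lra.
Qed.
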